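(* Let $g\colon\mathbb R^d\to[0,+\infty)$ be a proper log-concave function whose support contains the origin in its interior. Then a set $U\subset\mathbb R^d$ is star-like with respect to $g$ if and only if $\langle p,u\rangle>-1$ for all $u\in U\cap\operatorname{supp}g$ and all $p\in\partial(-\ln g)(u)$.
   Context: $\operatorname{supp}g=\{x:g(x)>0\}$; proper: upper semi-continuous with finite positive integral. $\partial\psi(u)=\{p:\psi(y)\ge\psi(u)+\langle p,y-u\rangle\ \forall y\}$. Lifting $\mathrm{lift}(g)=\{(x,y)\in\mathbb R^d\times\mathbb R:x\in\overline{\operatorname{supp}g},|y|\le g(x)\}$. Fréchet normal cone $N_A(a_0)=\{v:\forall\varepsilon>0\,\exists\delta>0:\langle v,a-a_0\rangle\le\varepsilon|a-a_0|\ \forall a\in A,|a-a_0|\le\delta\}$. $U$ is star-like with respect to $g$ if for every $u\in U\cap\operatorname{supp}g$, $\langle(u,g(u)),\bar v\rangle>0$ for all nonzero $\bar v\in N_{\mathrm{lift}(g)}((u,g(u)))$. *)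

(* Defs.v *)
From HB Require Import structures.
From mathcomp Require Import all_boot all_order all_algebra.
From mathcomp Require Import all_classical all_reals all_analysis.
Set Implicit Arguments. Unset Strict Implicit. Unset Printing Implicit Defensive.
Import Order.TTheory GRing.Theory Num.Theory.
Import numFieldNormedType.Exports.
Local Open Scope classical_set_scope.
Local Open Scope ring_scope.

Section Defs.
Variable R : realType.

Definition dotv (d : nat) (x y : 'rV[R]_d) : R := \sum_(i < d) x ord0 i * y ord0 i.
Definition enorm (d : nat) (x : 'rV[R]_d) : R := Num.sqrt (dotv x x).

Definition dotp (d : nat) (a b : 'rV[R]_d * R) : R := dotv a.1 b.1 + a.2 * b.2.
Definition enormp (d : nat) (a : 'rV[R]_d * R) : R := Num.sqrt (dotp a a).

Definition supp (d : nat) (g : 'rV[R]_d -> R) : set 'rV[R]_d := [set x | 0 < g x].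

Fixpoint iter_integral (n : nat) : ('rV[R]_n -> \bar R) -> \bar R :=
  match n return ('rV[R]_n -> \bar R) -> \bar R with
  | 0%N => fun f => f 0
  | n'.+1 => fun f =>
      (\int[@lebesgue_measure R]_(t in setT)
         iter_integral (fun v : 'rV[R]_n' => f (row_mx (t%:M : 'rV[R]_1) v)))%E
  end.

Definition upper_semicontinuous (d : nat) (g : 'rV[R]_d -> R) : Prop :=
  forall x t, g x < t -> \forall y \near x, g y < t.

Definition proper_fun (d : nat) (g : 'rV[R]_d -> R) : Prop :=
  upper_semicontinuous g /\
  (0 < iter_integral (fun x => (g x)%:E))%E /\
  (iter_integral (fun x => (g x)%:E) < +oo)%E.

Definition log_concave (d : nat) (g : 'rV[R]_d -> R) : Prop :=
  forall x y (l : R), 0 < l < 1 ->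
    powR (g x) (1 - l) * powR (g y) l <= g ((1 - l) *: x + l *: y).

Definition neglog (d : nat) (g : 'rV[R]_d -> R) (x : 'rV[R]_d) : \bar R :=
  if 0 < g x then (- ln (g x))%:E else +oo%E.

Definition subdiff (d : nat) (psi : 'rV[R]_d -> \bar R) (u : 'rV[R]_d) : set 'rV[R]_d :=
  [set p | forall y, (psi u + (dotv p (y - u))%:E <= psi y)%E].

Definition lift (d : nat) (g : 'rV[R]_d -> R) : set ('rV[R]_d * R) :=
  [set a | closure (supp g) a.1 /\ `|a.2| <= g a.1].

Definition frechet_normal (d : nat) (A : set ('rV[R]_d * R)) (a0 : 'rV[R]_d * R)
  : set ('rV[R]_d * R) :=
  [set v | forall eps : R, 0 < eps -> exists2 delta : R, 0 < delta &
     forall a, A a -> enormp (a - a0) <= delta ->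
       dotp v (a - a0) <= eps * enormp (a - a0)].

Definition star_like (d : nat) (U : set 'rV[R]_d) (g : 'rV[R]_d -> R) : Prop :=
  forall u, U u -> supp g u ->
    forall v, frechet_normal (lift g) (u, g u) v -> v != 0 ->
      0 < dotp (u, g u) v.

End Defs.

(* Main.v *)
Require Import Defs.
From HB Require Import structures.
From mathcomp Require Import all_boot all_order all_algebra.
From mathcomp Require Import all_classical all_reals all_analysis.
From mathcomp Require Import ring lra.
Import Order.TTheory GRing.Theory Num.Theory.
Import numFieldNormedType.Exports.
Local Open Scope classical_set_scope.
Local Open Scope ring_scope.

Section Aux.
Context {R : realType}.
Context {d : nat}.
Implicit Types x y z : 'rV[R]_d.

Lemma dotvC x y : dotv x y = dotv y x.
Proof. by apply: eq_bigr => i _; rewrite mulrC. Qed.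

Lemma dotvDr x y z : dotv x (y + z) = dotv x y + dotv x z.
Proof. by rewrite /dotv -big_split; apply: eq_bigr => i _; rewrite !mxE mulrDr. Qed.

Lemma dotvZr x (a : R) y : dotv x (a *: y) = a * dotv x y.
Proof. by rewrite /dotv mulr_sumr; apply: eq_bigr => i _; rewrite !mxE mulrCA. Qed.

Lemma dotvNr x y : dotv x (- y) = - dotv x y.
Proof. by rewrite -scaleN1r dotvZr mulN1r. Qed.

Lemma dotvBr x y z : dotv x (y - z) = dotv x y - dotv x z.
Proof. by rewrite dotvDr dotvNr. Qed.

Lemma dotvZl x (a : R) y : dotv (a *: x) y = a * dotv x y.
Proof. by rewrite dotvC dotvZr dotvC. Qed.

Lemma dotv_ge0 x : 0 <= dotv x x.
Proof. by apply: sumr_ge0 => i _; rewrite -expr2 sqr_ge0. Qed.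

Lemma dotv_gt0 x : x != 0 -> 0 < dotv x x.
Proof.
move=> x0; rewrite lt_def dotv_ge0 andbT; apply/negP => /eqP H.
move/negP: x0; apply; apply/eqP/rowP => i.
have := @psumr_eq0P R _ predT (fun i => x ord0 i * x ord0 i).
move=> /(_ (fun i _ => ltac:(by rewrite -expr2 sqr_ge0)) H i isT).
rewrite mxE => /eqP; rewrite mulf_eq0 orbb => /eqP ->.
by []. Qed.

Lemma key1 (gu y r e D : R): 0<gu -> gu/2 <= y -> `|y-gu| <= r -> r <= e*gu/2 -> 0 < e -> D <= gu/y - 1 -> gu*D + (y-gu) <= e*r.
Proof.
move=> gu0 hy hr re e0 hD.
have y0 : 0 < y by lra.
have h1 : gu * D <= gu * (gu/y - 1) by rewrite ler_pM2l.
set q := gu / y in h1 *.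
have qy : q * y = gu by rewrite /q divfK // gt_eqF.
have a1 : y - gu <= r by apply: le_trans hr; apply: ler_norm.
have a2 : gu - y <= r by apply: le_trans hr; rewrite distrC; apply: ler_norm.
have h2 : (y - gu)^+2 <= r^+2 by nra.
have h3 : (gu*(q-1) + (y-gu))*y = gu*(q*y) - gu*y + y*y - gu*y by ring.
rewrite qy in h3.
suff : (gu*(q-1) + (y-gu))*y <= (e*r)*y.
  rewrite ler_pM2r // => h4; lra.
rewrite h3.
have r0 : 0 <= r by apply: le_trans hr.
have h5 : r^+2 <= r * (e*gu/2) by rewrite expr2 ler_wpM2l.
have h6 : r * (e*gu/2) <= r * (e * y) by apply: ler_wpM2l => //; nra.
have h7 : (y - gu)^+2 = gu*gu - gu*y + y*y - gu*y by ring.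
rewrite -h7; apply: (le_trans h2); apply: (le_trans h5); apply: (le_trans h6).
by rewrite mulrA [r*e]mulrC.
Qed.
Lemma pairB (a c : 'rV[R]_d) (b e : R) : (a, b) - (c, e) = (a - c, b - e).
Proof. by []. Qed.

Lemma dotv0r x : dotv x 0 = 0.
Proof. by rewrite -(scale0r 0) dotvZr mul0r. Qed.

Lemma enormp_ge2 (a : 'rV[R]_d * R) : `|a.2| <= enormp a.
Proof.
rewrite /enormp /dotp -sqrtr_sqr ler_sqrt; last by rewrite addr_ge0 ?dotv_ge0 // -expr2 sqr_ge0.
by rewrite -expr2 lerDr dotv_ge0.
Qed.

Lemma enormp_ge0 (a : 'rV[R]_d * R) : 0 <= enormp a.
Proof. exact: sqrtr_ge0. Qed.

Lemma enormpZ (l : R) z (c : R) : 0 <= l -> enormp (l *: z, l * c) = l * enormp (z, c).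
Proof.
move=> l0; rewrite /enormp /dotp /= dotvZl dotvZr.
have -> : l * (l * dotv z z) + l * c * (l * c) = l^+2 * (dotv z z + c * c) by ring.
by rewrite sqrtrM ?sqr_ge0 // sqrtr_sqr ger0_norm.
Qed.
End Aux.

Theorem mainTheorem9 (R : realType) (d : nat) (g : 'rV[R]_d -> R)
  (g_ge0 : forall x, 0 <= g x)
  (g_proper : proper_fun g)
  (g_logc : log_concave g)
  (g_int0 : interior (supp g) 0)
  (U : set 'rV[R]_d) :
  star_like U g <->
  (forall u, U u -> supp g u ->
     forall p, subdiff (neglog g) u p -> -1 < dotv p u).
Proof.
split.
- move=> SL u Uu su p hp.
  have gu0 : 0 < g u := su.
  have Hn : frechet_normal (Defs.lift g) (u, g u) (g u *: p, 1).
    move=> e e0.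
    exists (Num.min (g u / 2) (e * g u / 2)).
      by rewrite lt_min; apply/andP; split; rewrite ?divr_gt0 ?mulr_gt0.
    case=> x y [_ hy] hr.
    have hyr := enormp_ge2 ((x, y) - (u, g u)).
    rewrite pairB /= in hyr hr *.
    move: hr; rewrite le_min => /andP[r1 r2].
    set r := enormp (x - u, y - g u) in hyr r1 r2 *.
    have yge : g u / 2 <= y.
      have : g u - y <= r by apply: le_trans hyr; rewrite distrC; apply: ler_norm.
      lra.
    have y0 : 0 < y by have := divr_gt0 gu0 (ltr0Sn R 1); lra.
    have gx0 : 0 < g x by apply: (lt_le_trans y0); apply: le_trans hy; apply: ler_norm.
    have hs := hp x; rewrite /neglog gu0 gx0 /= lee_fin in hs.
    have lnle : ln y <= ln (g x).
      have yx : y <= g x by apply: le_trans hy; apply: ler_norm.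
      rewrite ler_ln //.
    have lnineq : ln (g u) - ln y <= g u / y - 1.
      have := expR_ge1Dx (ln (g u) - ln y).
      rewrite expRD expRN !lnK //; lra.
    rewrite /dotp /= dotvZl mul1r.
    apply: key1 => //; lra.
  have nz : (g u *: p, 1 : R) != 0.
    by apply/negP => /eqP [] _ /eqP; rewrite oner_eq0.
  have := SL u Uu su _ Hn nz.
  rewrite /dotp /= dotvZr mulr1 dotvC -[X in 0 < _ + X]mulr1 -mulrDr pmulr_rgt0 //.
  lra.
- move=> H u Uu su [w t] hn vnz.
  have gu0 : 0 < g u := su.
  have t0 : 0 <= t.
    rewrite leNgt; apply/negP => tn.
    have [del del0 hdel] := hn (- t / 2) ltac:(lra).
    set h := Num.min del (g u).
    have h0 : 0 < h by rewrite lt_min del0.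
    have hgu : h <= g u by rewrite ge_min lexx orbT.
    have hdl : h <= del by rewrite ge_min lexx.
    have hl : Defs.lift g (u, g u - h).
      split; first exact: subset_closure.
      by rewrite /= ger0_norm; lra.
    have := hdel _ hl.
    have e1 : g u - h - g u = - h by ring.
    rewrite pairB subrr /enormp /dotp /= !dotv0r !add0r e1 mulrNN -expr2 sqrtr_sqr ger0_norm; last lra.
    move=> /(_ hdl).
    nra.
  have G : forall x, supp g x -> dotv w (x - u) + t * g u * (ln (g x) - ln (g u)) <= 0.
    move=> x sx; have gx0 : 0 < g x := sx.
    set L := ln (g x) - ln (g u).
    set R0 := enormp (x - u, g u * L).
    have R00 : 0 <= R0 := enormp_ge0 _.
    set A := dotv w (x - u) + t * g u * L.
    suff HA : forall e, 0 < e -> A <= e * R0.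
      rewrite leNgt; apply/negP => A0.
      have R01 : 0 < R0 + 1 by lra.
      have := HA (A / (R0 + 1)) (divr_gt0 A0 R01).
      rewrite mulrAC ler_pdivlMr //.
      nra.
    move=> e e0; have [del del0 hdel] := hn e e0.
    have Ln : 0 <= `|L| := normr_ge0 _.
    have Rd : 0 <= R0 / del by rewrite divr_ge0 // ltW.
    set D := 2 + R0 / del + `|L|.
    have D0 : 0 < D by rewrite /D; lra.
    set l := D^-1.
    have lD : l * D = 1 by rewrite mulVf // gt_eqF.
    have l0 : 0 < l by rewrite invr_gt0.
    have l1 : l * (R0 / del) <= 1 by rewrite -[X in _ <= X]lD ler_wpM2l ?(ltW l0) // /D; lra.
    have l2 : l * `|L| <= 1 by rewrite -[X in _ <= X]lD ler_wpM2l ?(ltW l0) // /D; lra.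
    have l3 : l * 2 <= 1 by rewrite -[X in _ <= X]lD ler_wpM2l ?(ltW l0) // /D; lra.
    have lR0 : l * R0 <= del.
      have -> : l * R0 = l * (R0 / del) * del by rewrite mulrA divfK // gt_eqF.
      by rewrite -[X in _ <= X]mul1r ler_wpM2r // ltW.
    have lL : `|l * L| <= 1 by rewrite normrM ger0_norm // ltW.
    have lL1 : -1 <= l * L by move: lL; rewrite ler_norml => /andP[].
    have lint : 0 < l < 1 by apply/andP; split => //; lra.
    set xl := (1 - l) *: u + l *: x.
    set yl := g u * (1 + l * L).
    have lc := g_logc u x l lint.
    rewrite /powR (gt_eqF gu0) (gt_eqF gx0) -expRD in lc.
    have ex : (1 - l) * ln (g u) + l * ln (g x) = ln (g u) + l * L by rewrite /L; ring.
    rewrite ex expRD lnK in lc; last by rewrite posrE.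
    have hyl : yl <= g xl.
      apply: le_trans lc; rewrite /yl ler_pM2l //; exact: expR_ge1Dx.
    have yl0 : 0 <= yl by rewrite /yl mulr_ge0 ?(ltW gu0) //; lra.
    have hl : Defs.lift g (xl, yl).
      split; last by rewrite /= ger0_norm.
      apply: subset_closure; apply: lt_le_trans lc.
      by rewrite mulr_gt0 // expR_gt0.
    have dx : xl - u = l *: (x - u).
      rewrite /xl scalerBl scale1r scalerBr addrAC [u - _ - u]addrAC subrr add0r addrC //.
    have dy : yl - g u = l * (g u * L) by rewrite /yl; ring.
    have := hdel _ hl; rewrite pairB dx dy enormpZ; last exact: ltW.
    move=> /(_ lR0); rewrite /dotp /= dotvZr => h.
    have eq1 : l * A = l * dotv w (x - u) + t * (l * (g u * L)) by rewrite /A; ring.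
    have eq2 : e * (l * R0) = l * (e * R0) by ring.
    by rewrite -(ler_pM2l l0) eq1 -eq2.
  rewrite le_eqVlt in t0; case/orP: t0 => [/eqP t0|tp].
  + rewrite -t0 in G vnz *.
    have wnz : w != 0.
      by apply: contraNneq vnz => ->.
    move: g_int0; rewrite /interior => /nbhs_norm0P [e /= e0 he].
    have wn : 0 <= `|w| := normr_ge0 _.
    set eta := e / (2 * (`|w| + 1)).
    have eta0 : 0 < eta by rewrite divr_gt0 //; lra.
    have hlt : `|eta *: w| < e.
      rewrite normrZ ger0_norm; last exact: ltW.
      have : eta * (2 * (`|w| + 1)) = e by rewrite /eta divfK // gt_eqF //; lra.
      nra.
    have := G (eta *: w) (he _ hlt).
    rewrite !mul0r addr0 dotvBr dotvZr => h.
    rewrite /dotp /= mulr0 addr0 dotvC.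
    have := dotv_gt0 w wnz.
    nra.
  + have gt0 : 0 < t * g u by rewrite mulr_gt0.
    set c := t * g u in G gt0.
    have hp : subdiff (neglog g) u (c^-1 *: w).
      move=> y; rewrite /neglog gu0; case: ifPn => gy; last by rewrite leey.
      rewrite lee_fin dotvZl.
      have := G y gy => hG.
      have : c^-1 * dotv w (y - u) <= c^-1 * (c * (ln (g u) - ln (g y))).
        rewrite ler_wpM2l // ?invr_ge0 ?(ltW gt0) //; lra.
      rewrite mulKf ?gt_eqF //; lra.
    have := H u Uu su _ hp; rewrite dotvZl => h.
    have : c * (-1) < c * (c^-1 * dotv w u) by rewrite ltr_pM2l.
    rewrite mulrA mulfV ?gt_eqF // mul1r dotvC /dotp /= /c => h2.
    lra.
Qed.
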